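(* Let $H = (V,E)$ be a hypertree with $E = \{e_1, \ldots, e_k\}$. Suppose that each edge $e_i$ has an associated (strict) partial order $<_i$ on the vertex set $e_i$. Define the relation $<$ on $V$ as the transitive closure of all the relations $<_i$, i.e. $x < y$ iff there is a chain $x = v_1 <_{i_1} v_2 <_{i_2} \cdots <_{i_{l-1}} v_l = y$ with $l \ge 2$. Then $(V, <)$ is a poset.
   Context: A hypergraph is a pair $H=(V,E)$ with $V$ finite and $E$ a family of subsets of $V$ (edges) with $|e|>1$ for each $e\in E$. A path is a sequence $v_1, e_1, v_2, e_2, \ldots, e_m, v_{m+1}$ with $e_i \in E$, $v_i, v_{i+1} \in e_i$, the edges distinct and the vertices distinct except that $v_1 = v_{m+1}$ is allowed; if $v_1 = v_{m+1}$ and $m>1$ it is a cycle. $H$ is connected if there is a path between any two vertices. A hypertree is a connected hypergraph with no cycles. *)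

(* Defs.v *)
From mathcomp Require Import all_boot.
Set Implicit Arguments. Unset Strict Implicit. Unset Printing Implicit Defensive.

Section Hyper.
Variable V : finType.

Definition hypergraph (E : {set {set V}}) : Prop :=
  forall e, e \in E -> 1 < #|e|.

(* hpath E v1 vs es : with vs = [v_2; ...; v_{m+1}] and es = [e_1; ...; e_m],
   the sequence v_1, e_1, v_2, ..., e_m, v_{m+1} is a path:
   each e_i \in E, v_i, v_{i+1} \in e_i, the edges are distinct, and the
   vertices are distinct except that v_1 = v_{m+1} is allowed
   (i.e. [v_1..v_m] and [v_2..v_{m+1}] are both duplicate-free). *)
Definition hpath (E : {set {set V}}) (v1 : V) (vs : seq V) (es : seq {set V}) : Prop :=
  [/\ size vs = size es,
      forall i, i < size es ->
        [/\ nth set0 es i \in E,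
            nth v1 (v1 :: vs) i \in nth set0 es i &
            nth v1 (v1 :: vs) i.+1 \in nth set0 es i],
      uniq es,
      uniq (take (size es) (v1 :: vs)) &
      uniq vs].

Definition hpath_between (E : {set {set V}}) (x y : V) : Prop :=
  exists vs es, hpath E x vs es /\ last x vs = y.

Definition hcycle (E : {set {set V}}) (v1 : V) (vs : seq V) (es : seq {set V}) : Prop :=
  [/\ hpath E v1 vs es, last v1 vs = v1 & 1 < size es].

Definition hconnected (E : {set {set V}}) : Prop :=
  forall x y : V, hpath_between E x y.

Definition hypertree (E : {set {set V}}) : Prop :=
  [/\ hypergraph E, hconnected E & ~ exists v1 vs es, hcycle E v1 vs es].

Definition strict_porder_on (e : {set V}) (r : rel V) : Prop :=
  [/\ forall x y, r x y -> x \in e /\ y \in e,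
      forall x, ~ r x x &
      forall x y z, r x y -> r y z -> r x z].

Definition edge_step (E : {set {set V}}) (lt : {set V} -> rel V) : rel V :=
  fun x y => [exists e in E, lt e x y].

Definition tclosure (E : {set {set V}}) (lt : {set V} -> rel V) (x y : V) : Prop :=
  exists s : seq V, [/\ s != [::], path (edge_step E lt) x s & last x s = y].

Definition strict_poset (r : V -> V -> Prop) : Prop :=
  (forall x, ~ r x x) /\ (forall x y z, r x y -> r y z -> r x z).

End Hyper.

(* Main.v *)
Require Import Defs.
From mathcomp Require Import all_boot.
From mathcomp Require Import zify.
From Stdlib Require Import Lia.
Set Implicit Arguments. Unset Strict Implicit. Unset Printing Implicit Defensive.

Section Proof.
Variable V : finType.
Variable E : {set {set V}}.
Local Notation P := ({set V} * V)%type.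

Lemma dup_split (T : eqType) (U : eqType) (f : T -> U) (t : seq T) :
  ~~ uniq (map f t) -> exists t1 p t2 q t3, t = t1 ++ p :: t2 ++ q :: t3 /\ f p = f q.
Proof.
elim: t => [|x t IH] //=.
case: (boolP (f x \in map f t)) => [/mapP [y yt fxy] _|nin /= nu].
  case/splitPr: yt => t2 t3.
  by exists [::], x, t2, y, t3.
have [t1 [p [t2 [q [t3 [-> fpq]]]]]] := IH nu.
by exists (x :: t1), p, t2, q, t3.
Qed.

Definition Rw (p q : P) := [&& q.1 \in E, p.2 \in q.1, q.2 \in q.1 & p.1 != q.1].

Lemma path_Rw_all a s : path Rw a s -> all (fun x : P => (x.1 \in E) && (x.2 \in x.1)) s.
Proof.
elim: s a => [|y s IH] a //= /andP [/and4P [h1 _ h3 _] /IH ->].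
by rewrite h1 h3.
Qed.

Lemma walk_cycle n (t : seq P) : size t <= n -> 1 < size t -> cycle Rw t ->
  uniq (map snd t) -> exists v1 vs es, hcycle E v1 vs es.
Proof.
elim: n t => [|n IH] t; first by case: t.
move=> sz s2 cyc us.
case: (boolP (uniq (map fst t))) => [uf|nuf].
  case/lastP: t sz s2 cyc us uf => [//|t0 v] sz s2 cyc us uf.
  exists v.2, (map snd (rcons t0 v)), (map fst (rcons t0 v)).
  have hp : path Rw v (rcons t0 v) by move: cyc; rewrite (cycle_path v) last_rcons.
  split; last by rewrite size_map.
  - split.
    + by rewrite !size_map.
    + move=> i; rewrite size_map => hi.
      have := (pathP v hp) i hi.
      case/and4P => h1 h2 h3 _.
      rewrite (nth_map v) // h1; split => //.
        have -> : v.2 :: [seq i.2 | i <- rcons t0 v] = map snd (v :: rcons t0 v) by [].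
        by rewrite (nth_map v) //= ltnW.
      by rewrite /= (nth_map v).
    + exact: uf.
    + rewrite map_rcons size_rcons /= map_rcons -cats1 take_size_cat ?size_map //.
      by move: us; rewrite map_rcons rcons_uniq.
    + exact: us.
  - by rewrite map_rcons last_rcons.
have [t1 [p [t2 [q [t3 [ht fpq]]]]]] := dup_split nuf.
have cu : cycle Rw (p :: t2 ++ q :: t3 ++ t1).
  by rewrite -(rot_cycle (size t1)) ht rot_size_cat /= -catA in cyc.
have uu : uniq (map snd (p :: t2 ++ q :: t3 ++ t1)).
  by rewrite -(rot_uniq (size t1)) -map_rot ht rot_size_cat /= -catA in us.
move: cu; rewrite /cycle -cats1 -catA cat_path /= => /and3P [pt2 Rq rest].
have allu := path_Rw_all (rest : path Rw q ((t3 ++ t1) ++ [:: p])).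
have pE : (p.1 \in E) && (p.2 \in p.1).
  by move: allu; rewrite all_cat /= => /and3P [_ -> _].
apply: (IH (p :: t2)).
- move: sz; rewrite ht !size_cat /= size_cat /=; lia.
- case: t2 pt2 Rq {ht uu} => [|y t2] //= _.
  by rewrite /Rw fpq eqxx !andbF.
- rewrite /cycle rcons_path pt2 /=.
  move: Rq pE; rewrite /Rw -fpq => /and4P [_ -> _ ->] /andP [-> ->].
  by [].
  move: uu; rewrite -cat_cons map_cat cat_uniq => /andP [].
  by [].
Qed.

Variable lt : {set V} -> rel V.
Hypothesis hpo : forall e, e \in E -> strict_porder_on e (lt e).
Hypothesis noc : ~ exists v1 vs es, hcycle E v1 vs es.

Definition st (p q : P) := (q.1 \in E) && lt q.1 p.2 q.2.
Definition nq (p q : P) := p.1 != q.1.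

Lemma path_st_eq a b s : a.2 = b.2 -> path st a s = path st b s.
Proof. by case: s => //= y s; rewrite /st => ->. Qed.

Lemma st_trans c a b : st c a -> st a b -> a.1 = b.1 -> st c b.
Proof.
rewrite /st => /andP [_ h1] /andP [bE h2] eab.
rewrite bE /=; have [_ _ tr] := hpo bE.
by apply: tr h2; rewrite -eab.
Qed.

Lemma path_neg_split (T : Type) (r : rel T) x s : ~~ path r x s ->
  exists s1 a b s2, x :: s = s1 ++ a :: b :: s2 /\ ~~ r a b.
Proof.
elim: s x => [|y s IH] x //=.
case: (boolP (r x y)) => [rxy /= /IH [s1 [a [b [s2 [-> nr]]]]]| nr _].
  by exists (x :: s1), a, b, s2.
by exists [::], x, y, s.
Qed.

Lemma st_Rw a b : st a b -> nq a b -> Rw a b.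
Proof.
rewrite /st /nq /Rw => /andP [bE h] ->; rewrite bE andbT /=.
have [m _ _] := hpo bE.
by have [-> ->] := m _ _ h.
Qed.

Lemma no_chain n (t : seq P) : size t <= n -> t != [::] -> cycle st t -> False.
Proof.
elim: n t => [|n IH] t; first by case: t.
move=> sz tn cyc.
case: (boolP (uniq (map snd t))) => [us|nus]; last first.
  have [t1 [p [t2 [q [t3 [ht fpq]]]]]] := dup_split nus.
  have cu : cycle st (p :: t2 ++ q :: t3 ++ t1).
    by rewrite -(rot_cycle (size t1)) ht rot_size_cat /= -catA in cyc.
  move: cu; rewrite /cycle -cats1 -catA cat_path /= => /and3P [pt2 Rq _].
  apply: (IH (rcons t2 q)).
  - move: sz; rewrite ht !size_cat /= size_cat /= size_rcons; lia.
  - by case: t2 {pt2 Rq ht}.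
  - rewrite (cycle_path q) last_rcons (@path_st_eq q p) // rcons_path pt2.
    exact: Rq.
case: t sz tn cyc us => [|x [|y t]] // sz _ cyc us.
  move: cyc; rewrite /cycle /= /st andbT => /andP [xE h].
  by have [_ irr _] := hpo xE; apply: (irr x.2).
case: (boolP (cycle nq [:: x, y & t])) => [cn|ncn].
  apply: noc; apply: (walk_cycle (n := (size t).+2) (t := [:: x, y & t])) => //.
  apply: (@sub_cycle _ (SimplRel (fun a b => st a b && nq a b))).
    by move=> a b /= /andP [] /st_Rw.
  by rewrite cycle_relI cyc cn.
move: ncn cyc sz; set u := [:: x, y & t]; have su : 1 < size u by [].
clearbody u => ncn cyc sz.
move: ncn; rewrite (cycle_path x) => /(@path_neg_split _ nq) [s1 [a [b [s2 [hs nab]]]]].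
have eab : a.1 = b.1 by apply/eqP; move: nab; rewrite /nq negbK.
move: cyc; rewrite (cycle_path x) => cyc.
case: s1 hs => [|z s1] /= [].
  move=> ha hu; subst u.
  case/lastP: s2 ha cyc su sz => [|m a'] ha cyc su sz //.
  rewrite /= last_rcons in ha; subst a'.
  rewrite /= last_rcons in cyc.
  move: cyc => /= /andP [sab]; rewrite rcons_path => /andP [pm sma].
  apply: (IH (b :: m)).
  - move: sz; rewrite /= size_rcons; lia.
  - by [].
  - rewrite (cycle_path x) /= pm andbT.
    exact: st_trans sma sab eab.
move=> hz hu; subst u.
apply: (IH (s1 ++ b :: s2)).
- move: sz; rewrite !size_cat /=; lia.
- by case: s1 {hz sz cyc su}.
- rewrite (cycle_path x).
  have -> : last x (s1 ++ b :: s2) = last x (s1 ++ [:: a, b & s2]).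
    by rewrite !last_cat.
  rewrite hz; move: cyc; rewrite hz !cat_path /= => /andP [-> /and3P [h1 h2 ->]].
  by rewrite (st_trans h1 h2 eab).
Qed.
End Proof.

Theorem lemma3p2 (V : finType) (E : {set {set V}}) (lt : {set V} -> rel V) :
  hypertree E ->
  (forall e, e \in E -> strict_porder_on e (lt e)) ->
  strict_poset (tclosure E lt).
Proof.
move=> [_ _ noc] hpo; split; last first.
  move=> x y z [s1 [n1 p1 l1]] [s2 [n2 p2 l2]].
  exists (s1 ++ s2); split.
  - by case: s1 n1 {p1 l1}.
  - by rewrite cat_path p1 l1.
  - by rewrite last_cat l1.
move=> x [s [ns ps ls]].
have [t [ht pt]] : exists t : seq ({set V} * V),
    map snd t = s /\ path (st E lt) (set0, x) t.
  elim: s x ps {ns ls} => [|y s IH] x /=; first by exists [::].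
  case/andP => /existsP [e /andP [eE h]] /IH [t [ht pt]].
  exists ((e, y) :: t); split; first by rewrite /= ht.
  rewrite /= {1}/st /= eE h /=.
  by rewrite (@path_st_eq _ _ _ _ (set0, y)).
apply: (@no_chain V E lt hpo noc (size t) t) => //.
  by apply: contraNneq ns => tn; rewrite -ht tn.
case: t ht pt => // p t ht pt.
rewrite (cycle_path p).
rewrite -(@path_st_eq _ _ _ (set0, x)) //.
by rewrite -ls -ht /= (last_map snd).
Qed.
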